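(* Let $\mathfrak{S}$ be a labelled sequent. Any saturation phase started on $\mathfrak{S}$ terminates and yields a finite derivation (with root $\mathfrak{S}$) whose open leaves are saturated.
   Context: Formulas: fix a countable set $\mathtt{Prop}$ of propositional atoms; formulas are generated by $A ::= \bot \mid p \mid A \to A \mid \Box A \mid \triangle A$ with $p \in \mathtt{Prop}$. Labelled sequents: fix a countable set $\mathtt{Lab}$ of labels. A labelled formula is $x:A$ with $x\in\mathtt{Lab}$ and $A$ a formula; a relational atom is $xRy$ or $xSy$ with $x,y \in \mathtt{Lab}$. A sequent $\mathcal{R},\Gamma\Rightarrow\Omega$ consists of a finite multiset $\mathcal{R}$ of relational atoms and finite multisets $\Gamma,\Omega$ of labelled formulas; commas denote multiset union. Rules used (premisses above, conclusion below; $\mathcal{R},\Gamma,\Omega$ arbitrary): ($\to$R) from $\mathcal{R},\Gamma,x:A\Rightarrow x:B,\Omega$ infer $\mathcal{R},\Gamma\Rightarrow x:A\to B,\Omega$; ($\to$L) from $\mathcal{R},\Gamma\Rightarrow x:A,\Omega$ and $\mathcal{R},\Gamma,x:B\Rightarrow\Omega$ infer $\mathcal{R},\Gamma,x:A\to B\Rightarrow\Omega$; ($\Box$L) from $\mathcal{R},xRy,x:\Box A,y:A,\Gamma\Rightarrow\Omega$ infer $\mathcal{R},xRy,x:\Box A,\Gamma\Rightarrow\Omega$; ($\triangle$L) from $\mathcal{R},xSy,x:\triangle A,y:A,\Gamma\Rightarrow\Omega$ infer $\mathcal{R},xSy,x:\triangle A,\Gamma\Rightarrow\Omega$; ($\mathrm{trans}_{\circ\bullet}$,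 for each $\circ,\bullet\in\{R,S\}$) from $\mathcal{R},x\circ y,y\bullet z,x\bullet z,\Gamma\Rightarrow\Omega$ infer $\mathcal{R},x\circ y,y\bullet z,\Gamma\Rightarrow\Omega$. A derivation is a (finite or infinite) tree of sequents built from rule instances, possibly with open leaves (leaves that are not conclusions of premiss-free rules). Saturation: in a sequent $\mathcal{R},\Gamma\Rightarrow\Omega$ containing $x:A$, the labelled formula $x:A$ is saturated if: $A\in\mathtt{Prop}$ or $A=\bot$; or $A=A_1\to A_2$ and [if $x:A\in\Gamma$ then $x:A_1\in\Omega$ or $x:A_2\in\Gamma$] and [if $x:A\in\Omega$ then $x:A_1\in\Gamma$ and $x:A_2\in\Omega$]; or $A=\Box A_1$ and if $x:A\in\Gamma$ then $y:A_1\in\Gamma$ for all $y$ with $xRy\in\mathcal{R}$; or $A=\triangle A_1$ and if $x:A\in\Gamma$ then $y:A_1\in\Gamma$ for all $y$ with $xSy\in\mathcal{R}$. A sequent is saturated if all its labelled formulas are saturated and $\mathcal{R}$ is closed under the transitivity rules (whenever $x\circ y,y\bullet z\in\mathcal{R}$ with $\circ,\bullet\in\{R,S\}$, also $x\bullet z\in\mathcal{R}$). Saturation phase: starting from a sequent (or from the open leaves of a derivation), repeatedly apply, bottom-up, the rules $\to$L, $\to$R, $\Box$L, $\triangle$L and $\mathrm{trans}_{\circ\bullet}$ to open leaves that are not saturated, in any order, each application addressing a formula or pair of relational atoms that is not yet saturated in that leaf, for as long as possible. *)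

(* Defs.v *)
From Stdlib Require Import List Permutation Relations.
Import ListNotations.

Definition prop_atom := nat.
Definition label := nat.

Inductive form : Type :=
| Bot : form
| Var : prop_atom -> form
| Imp : form -> form -> form
| Box : form -> form
| Tri : form -> form.

Definition lform : Type := (label * form)%type.

Inductive rkind : Type := kR | kS.

Inductive ratom : Type := Rel : rkind -> label -> label -> ratom.

(* A sequent  R, Gamma => Omega; the three lists are read as finite
   multisets (lists up to permutation, see seq_equiv). *)
Record sequent : Type := mkSeq {
  rels : list ratom;
  ante : list lform;
  succ : list lform }.

Definition seq_equiv (s t : sequent) : Prop :=
  Permutation (rels s) (rels t) /\ Permutation (ante s) (ante t) /\
  Permutation (succ s) (succ t).

Inductive rule_inst (s : sequent) : list sequent -> Prop :=
| ri_impL : forall x A B G p1 p2,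
    Permutation (ante s) ((x, Imp A B) :: G) ->
    seq_equiv p1 (mkSeq (rels s) G ((x, A) :: succ s)) ->
    seq_equiv p2 (mkSeq (rels s) ((x, B) :: G) (succ s)) ->
    rule_inst s [p1; p2]
| ri_impR : forall x A B O p,
    Permutation (succ s) ((x, Imp A B) :: O) ->
    seq_equiv p (mkSeq (rels s) ((x, A) :: ante s) ((x, B) :: O)) ->
    rule_inst s [p]
| ri_boxL : forall x y A p,
    In (Rel kR x y) (rels s) -> In (x, Box A) (ante s) ->
    seq_equiv p (mkSeq (rels s) ((y, A) :: ante s) (succ s)) ->
    rule_inst s [p]
| ri_triL : forall x y A p,
    In (Rel kS x y) (rels s) -> In (x, Tri A) (ante s) ->
    seq_equiv p (mkSeq (rels s) ((y, A) :: ante s) (succ s)) ->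
    rule_inst s [p]
| ri_trans : forall k1 k2 x y z p,
    In (Rel k1 x y) (rels s) -> In (Rel k2 y z) (rels s) ->
    seq_equiv p (mkSeq (Rel k2 x z :: rels s) (ante s) (succ s)) ->
    rule_inst s [p].

Definition lf_saturated (s : sequent) (lf : lform) : Prop :=
  let (x, A) := lf in
  match A with
  | Bot => True
  | Var _ => True
  | Imp A1 A2 =>
      (In (x, A) (ante s) -> In (x, A1) (succ s) \/ In (x, A2) (ante s)) /\
      (In (x, A) (succ s) -> In (x, A1) (ante s) /\ In (x, A2) (succ s))
  | Box A1 =>
      In (x, A) (ante s) -> forall y, In (Rel kR x y) (rels s) -> In (y, A1) (ante s)
  | Tri A1 =>
      In (x, A) (ante s) -> forall y, In (Rel kS x y) (rels s) -> In (y, A1) (ante s)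
  end.

Definition trans_closed (r : list ratom) : Prop :=
  forall k1 k2 x y z, In (Rel k1 x y) r -> In (Rel k2 y z) r -> In (Rel k2 x z) r.

Definition saturated (s : sequent) : Prop :=
  (forall lf, In lf (ante s) \/ In lf (succ s) -> lf_saturated s lf) /\
  trans_closed (rels s).

Inductive sat_app (s : sequent) : list sequent -> Prop :=
| sa_impL : forall x A B G p1 p2,
    Permutation (ante s) ((x, Imp A B) :: G) ->
    ~ In (x, A) (succ s) -> ~ In (x, B) (ante s) ->
    seq_equiv p1 (mkSeq (rels s) G ((x, A) :: succ s)) ->
    seq_equiv p2 (mkSeq (rels s) ((x, B) :: G) (succ s)) ->
    sat_app s [p1; p2]
| sa_impR : forall x A B O p,
    Permutation (succ s) ((x, Imp A B) :: O) ->
    ~ (In (x, A) (ante s) /\ In (x, B) (succ s)) ->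
    seq_equiv p (mkSeq (rels s) ((x, A) :: ante s) ((x, B) :: O)) ->
    sat_app s [p]
| sa_boxL : forall x y A p,
    In (Rel kR x y) (rels s) -> In (x, Box A) (ante s) ->
    ~ In (y, A) (ante s) ->
    seq_equiv p (mkSeq (rels s) ((y, A) :: ante s) (succ s)) ->
    sat_app s [p]
| sa_triL : forall x y A p,
    In (Rel kS x y) (rels s) -> In (x, Tri A) (ante s) ->
    ~ In (y, A) (ante s) ->
    seq_equiv p (mkSeq (rels s) ((y, A) :: ante s) (succ s)) ->
    sat_app s [p]
| sa_trans : forall k1 k2 x y z p,
    In (Rel k1 x y) (rels s) -> In (Rel k2 y z) (rels s) ->
    ~ In (Rel k2 x z) (rels s) ->
    seq_equiv p (mkSeq (Rel k2 x z :: rels s) (ante s) (succ s)) ->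
    sat_app s [p].

(* Leaf s : an open leaf; Node s ch : s is the conclusion of a rule
   instance whose premisses are the roots of ch (all rules used here
   have at least one premiss, so there are no closed leaves). *)
Inductive deriv : Type :=
| Leaf : sequent -> deriv
| Node : sequent -> list deriv -> deriv.

Definition root (t : deriv) : sequent :=
  match t with Leaf s => s | Node s _ => s end.

Fixpoint open_leaves (t : deriv) : list sequent :=
  match t with
  | Leaf s => [s]
  | Node _ ch =>
      (fix go (l : list deriv) : list sequent :=
         match l with [] => [] | d :: l' => open_leaves d ++ go l' end) ch
  end.

Fixpoint is_deriv (t : deriv) : Prop :=
  match t with
  | Leaf _ => True
  | Node s ch =>
      rule_inst s (map root ch) /\
      (fix go (l : list deriv) : Prop :=
         match l with [] => True | d :: l' => is_deriv d /\ go l' end) ch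
  end.

Inductive expand : deriv -> deriv -> Prop :=
| ex_leaf : forall s ps, sat_app s ps -> expand (Leaf s) (Node s (map Leaf ps))
| ex_node : forall s l1 d d' l2, expand d d' ->
    expand (Node s (l1 ++ d :: l2)) (Node s (l1 ++ d' :: l2)).

(* Main.v *)
Require Import Defs.
From Stdlib Require Import List Permutation Relations.
From Stdlib Require Import Arith Lia Classical.
Import ListNotations.

Fixpoint ac {A : Type} (dec : forall x y : A, {x = y} + {x <> y}) (w : A -> nat)
  (U l : list A) : nat :=
  match U with
  | [] => 0
  | a :: U' => (if in_dec dec a l then 0 else w a) + ac dec w U' l
  end.

Lemma acG1 {A} dec w : forall (U l l' : list A),
  (forall t, In t U -> In t l -> In t l') -> ac dec w U l' <= ac dec w U l.
Proof.
  induction U as [|a U IH]; simpl; intros l l' H; [lia|].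
  assert (IH' := IH l l' (fun t Ht => H t (or_intror Ht))).
  destruct (in_dec dec a l), (in_dec dec a l'); try lia.
  exfalso; auto.
Qed.

Lemma acG2 {A} dec w : forall (U l l' : list A) t0,
  (forall t, In t U -> In t l -> In t l') -> In t0 U -> ~ In t0 l -> In t0 l' ->
  ac dec w U l' + w t0 <= ac dec w U l.
Proof.
  induction U as [|a U IH]; simpl; intros l l' t0 H H0 H1 H2; [contradiction|].
  destruct (dec a t0) as [->|ne].
  - assert (G := acG1 dec w U l l' (fun t Ht => H t (or_intror Ht))).
    destruct (in_dec dec t0 l); [contradiction|].
    destruct (in_dec dec t0 l'); [|contradiction]. lia.
  - destruct H0 as [H0|H0]; [congruence|].
    assert (IH' := IH l l' t0 (fun t Ht => H t (or_intror Ht)) H0 H1 H2).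
    destruct (in_dec dec a l), (in_dec dec a l'); try lia.
    exfalso; auto.
Qed.

Lemma acG3 {A} dec w : forall (U l l' : list A) u, NoDup U ->
  (forall t, In t U -> t <> u -> In t l -> In t l') ->
  ac dec w U l' <= ac dec w U l + w u.
Proof.
  induction U as [|a U IH]; simpl; intros l l' u Hnd H; [lia|].
  inversion Hnd as [|? ? Hnin Hnd']; subst.
  destruct (dec a u) as [->|ne].
  - assert (G := acG1 dec w U l l' (fun t Ht => H t (or_intror Ht)
        (fun e => Hnin (eq_ind t (fun z => In z U) Ht u e)))).
    destruct (in_dec dec u l), (in_dec dec u l'); lia.
  - assert (IH' := IH l l' u Hnd' (fun t Ht => H t (or_intror Ht))).
    destruct (in_dec dec a l), (in_dec dec a l'); try lia.
    exfalso; eauto.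
Qed.

Lemma acG4 {A} dec w : forall (U l l' : list A) u t0, NoDup U ->
  (forall t, In t U -> t <> u -> In t l -> In t l') ->
  t0 <> u -> In t0 U -> ~ In t0 l -> In t0 l' ->
  ac dec w U l' + w t0 <= ac dec w U l + w u.
Proof.
  induction U as [|a U IH]; simpl; intros l l' u t0 Hnd H Hne H0 H1 H2; [contradiction|].
  inversion Hnd as [|? ? Hnin Hnd']; subst.
  destruct (dec a u) as [->|ne].
  - destruct H0 as [H0|H0]; [congruence|].
    assert (G := acG2 dec w U l l' t0 (fun t Ht => H t (or_intror Ht)
        (fun e => Hnin (eq_ind t (fun z => In z U) Ht u e))) H0 H1 H2).
    destruct (in_dec dec u l), (in_dec dec u l'); lia.
  - destruct (dec a t0) as [->|ne2].
    + assert (G := acG3 dec w U l l' u Hnd' (fun t Ht => H t (or_intror Ht))).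
      destruct (in_dec dec t0 l); [contradiction|].
      destruct (in_dec dec t0 l'); [|contradiction]. lia.
    + destruct H0 as [H0|H0]; [congruence|].
      assert (IH' := IH l l' u t0 Hnd' (fun t Ht => H t (or_intror Ht)) Hne H0 H1 H2).
      destruct (in_dec dec a l), (in_dec dec a l'); try lia.
      exfalso; eauto.
Qed.

Lemma ac_perm {A} dec w : forall (U l l' : list A), Permutation l l' ->
  ac dec w U l = ac dec w U l'.
Proof.
  intros U l l' P.
  assert (G1 := acG1 dec w U l l' (fun t _ H => Permutation_in _ P H)).
  assert (G2 := acG1 dec w U l' l (fun t _ H => Permutation_in _ (Permutation_sym P) H)).
  lia.
Qed.

Definition form_dec : forall x y : form, {x = y} + {x <> y}.
Proof. decide equality; apply Nat.eq_dec. Defined.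
Definition lf_dec : forall x y : lform, {x = y} + {x <> y}.
Proof. decide equality; [apply form_dec | apply Nat.eq_dec]. Defined.
Definition ratom_dec : forall x y : ratom, {x = y} + {x <> y}.
Proof. decide equality; try apply Nat.eq_dec; decide equality. Defined.

Fixpoint fsize (A : form) : nat :=
  match A with
  | Bot => 1 | Var _ => 1
  | Imp A B => S (fsize A + fsize B)
  | Box A => S (fsize A) | Tri A => S (fsize A)
  end.

Fixpoint subs (A : form) : list form :=
  match A with
  | Bot => [Bot] | Var p => [Var p]
  | Imp A B => Imp A B :: subs A ++ subs B
  | Box A' => Box A' :: subs A'
  | Tri A' => Tri A' :: subs A'
  end.

Lemma subs_self A : In A (subs A).
Proof. destruct A; simpl; auto. Qed.

Lemma subs_trans : forall D C, In C (subs D) -> incl (subs C) (subs D).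
Proof.
  induction D; simpl; intros C H; try (destruct H as [<-|[]]; apply incl_refl).
  - destruct H as [<-|H]; [apply incl_refl|].
    apply in_app_or in H; destruct H as [H|H].
    + intros t Ht; right; apply in_or_app; left; eapply IHD1; eauto.
    + intros t Ht; right; apply in_or_app; right; eapply IHD2; eauto.
  - destruct H as [<-|H]; [apply incl_refl|].
    intros t Ht; right; eapply IHD; eauto.
  - destruct H as [<-|H]; [apply incl_refl|].
    intros t Ht; right; eapply IHD; eauto.
Qed.

Definition labs_r (a : ratom) : list label := match a with Rel _ x y => [x; y] end.
Definition LS (S : sequent) : list label :=
  flat_map labs_r (rels S) ++ map fst (ante S ++ succ S).
Definition FS (S : sequent) : list form :=
  flat_map (fun lf => subs (snd lf)) (ante S ++ succ S).
Definition UF S := nodup lf_dec (list_prod (LS S) (FS S)).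
Definition UR S := flat_map (fun k => flat_map (fun x => map (fun y => Rel k x y) (LS S)) (LS S)) [kR; kS].
Definition MM S := fold_right Nat.max 0 (map fsize (FS S)).
Definition wt S (lf : lform) := 2 ^ (MM S - fsize (snd lf)).

Definition Phi S (s : sequent) : nat :=
  ac ratom_dec (fun _ => 1) (UR S) (rels s) + ac lf_dec (wt S) (UF S) (ante s)
  + ac lf_dec (wt S) (UF S) (succ s).

Definition Inv S (s : sequent) : Prop :=
  (forall k x y, In (Rel k x y) (rels s) -> In x (LS S) /\ In y (LS S)) /\
  (forall x A, In (x, A) (ante s) \/ In (x, A) (succ s) -> In x (LS S) /\ In A (FS S)).

Lemma inUF S x A : In x (LS S) -> In A (FS S) -> In (x, A) (UF S).
Proof. intros; unfold UF; apply nodup_In, in_prod; auto. Qed.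

Lemma inUR S k x y : In x (LS S) -> In y (LS S) -> In (Rel k x y) (UR S).
Proof.
  intros Hx Hy; unfold UR; apply in_flat_map; exists k; split.
  - destruct k; simpl; auto.
  - apply in_flat_map; exists x; split; auto. apply in_map; auto.
Qed.

Lemma FS_sub S C D : In C (FS S) -> In D (subs C) -> In D (FS S).
Proof.
  unfold FS; intros H1 H2; apply in_flat_map in H1; destruct H1 as [lf [H1 H3]].
  apply in_flat_map; exists lf; split; auto. eapply subs_trans; eauto.
Qed.

Lemma fold_max_le : forall l a, In a l -> a <= fold_right Nat.max 0 l.
Proof. induction l; simpl; intros b H; [contradiction|]. destruct H as [->|H]; [lia|].
  specialize (IHl b H); lia. Qed.

Lemma MM_le S A : In A (FS S) -> fsize A <= MM S.
Proof. intros H; apply fold_max_le, in_map; auto. Qed.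

Lemma wt_lt S x y A C : fsize A < fsize C -> fsize C <= MM S -> wt S (y, C) < wt S (x, A).
Proof. intros; unfold wt; simpl. apply Nat.pow_lt_mono_r; lia. Qed.

Lemma wt_pos S t : 0 < wt S t.
Proof. unfold wt. apply Nat.neq_0_lt_0, Nat.pow_nonzero. lia. Qed.

Lemma Phi_equiv S p q : seq_equiv p q -> Phi S p = Phi S q.
Proof.
  intros [P1 [P2 P3]]; unfold Phi.
  rewrite (ac_perm _ _ _ _ _ P1), (ac_perm _ _ _ _ _ P2), (ac_perm _ _ _ _ _ P3); reflexivity.
Qed.

Lemma Inv_equiv S p q : seq_equiv p q -> Inv S q -> Inv S p.
Proof.
  intros [P1 [P2 P3]] [I1 I2]; split.
  - intros k x y H; apply (I1 k); eapply Permutation_in; eauto.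
  - intros x A [H|H]; apply I2; [left|right]; eapply Permutation_in; eauto.
Qed.

Lemma Inv_init S : Inv S S.
Proof.
  split.
  - intros k x y H; unfold LS; split; apply in_or_app; left; apply in_flat_map;
      exists (Rel k x y); simpl; auto.
  - intros x A H; split.
    + unfold LS; apply in_or_app; right. apply in_map_iff; exists (x, A); split; auto.
      apply in_or_app; auto.
    + unfold FS; apply in_flat_map; exists (x, A); split; [apply in_or_app; auto| apply subs_self].
Qed.

Lemma step_dec S s ps p : Inv S s -> sat_app s ps -> In p ps ->
  Inv S p /\ Phi S p < Phi S s.
Proof.
  intros [I1 I2] Hsa Hp.
  assert (NDU : NoDup (UF S)) by apply NoDup_nodup.
  destruct Hsa as [x A B G p1 p2 Hperm HnA HnB E1 E2
                  | x A B O p0 Hperm Hn E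
                  | x y A p0 Hr Hb Hn E
                  | x y A p0 Hr Hb Hn E
                  | k1 k2 x y z p0 Hr1 Hr2 Hn E].
  - assert (HG : forall t, In t G -> In t (ante s)) by
      (intros t H; exact (Permutation_in _ (Permutation_sym Hperm) (in_cons _ _ _ H))).
    assert (Hu : In (x, Imp A B) (ante s)) by
      exact (Permutation_in _ (Permutation_sym Hperm) (in_eq _ _)).
    assert (Hrem : forall t, In t (UF S) -> t <> (x, Imp A B) -> In t (ante s) -> In t G).
    { intros t _ Hne H. apply (Permutation_in _ Hperm) in H. destruct H; congruence. }
    destruct (I2 x (Imp A B) (or_introl Hu)) as [Hx HI].
    assert (HA : In A (FS S)) by (eapply FS_sub; [exact HI| simpl; right; apply in_or_app; left; apply subs_self]).
    assert (HB : In B (FS S)) by (eapply FS_sub; [exact HI| simpl; right; apply in_or_app; right; apply subs_self]).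
    assert (Hw : wt S (x, Imp A B) < wt S (x, A)) by (apply wt_lt; [simpl; lia| apply MM_le; auto]).
    assert (Hw2 : wt S (x, Imp A B) < wt S (x, B)) by (apply wt_lt; [simpl; lia| apply MM_le; auto]).
    destruct Hp as [<-|[<-|[]]].
    + rewrite (Phi_equiv S _ _ E1). split.
      * apply (Inv_equiv S _ _ E1). split; [exact I1|].
        simpl; intros x' A' [H|[H|H]].
        -- apply I2; left; auto.
        -- injection H as <- <-; auto.
        -- apply I2; right; auto.
      * unfold Phi; cbn [rels ante succ].
        assert (G3 := acG3 lf_dec (wt S) (UF S) (ante s) G (x, Imp A B) NDU Hrem).
        assert (G2 := acG2 lf_dec (wt S) (UF S) (succ s) ((x, A) :: succ s) (x, A)
                  (fun t _ H => in_cons _ _ _ H) (inUF S x A Hx HA) HnA (in_eq _ _)).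
        lia.
    + rewrite (Phi_equiv S _ _ E2). split.
      * apply (Inv_equiv S _ _ E2). split; [exact I1|].
        simpl; intros x' A' [[H|H]|H].
        -- injection H as <- <-; auto.
        -- apply I2; left; auto.
        -- apply I2; right; auto.
      * unfold Phi; cbn [rels ante succ].
        assert (Hne : (x, B) <> (x, Imp A B)).
        { intro e; injection e as e. assert (fsize B = fsize (Imp A B)) by congruence. simpl in *; lia. }
        assert (G4 := acG4 lf_dec (wt S) (UF S) (ante s) ((x, B) :: G) (x, Imp A B) (x, B) NDU
                  (fun t Ht Hne' H => in_cons _ _ _ (Hrem t Ht Hne' H)) Hne (inUF S x B Hx HB) HnB (in_eq _ _)).
        lia.
  - destruct Hp as [<-|[]].
    assert (HO : forall t, In t O -> In t (succ s)) by
      (intros t H; exact (Permutation_in _ (Permutation_sym Hperm) (in_cons _ _ _ H))).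
    assert (Hu : In (x, Imp A B) (succ s)) by
      exact (Permutation_in _ (Permutation_sym Hperm) (in_eq _ _)).
    assert (Hrem : forall t, In t (UF S) -> t <> (x, Imp A B) -> In t (succ s) -> In t ((x, B) :: O)).
    { intros t _ Hne H. apply (Permutation_in _ Hperm) in H. destruct H; [congruence|]. right; auto. }
    destruct (I2 x (Imp A B) (or_intror Hu)) as [Hx HI].
    assert (HA : In A (FS S)) by (eapply FS_sub; [exact HI| simpl; right; apply in_or_app; left; apply subs_self]).
    assert (HB : In B (FS S)) by (eapply FS_sub; [exact HI| simpl; right; apply in_or_app; right; apply subs_self]).
    assert (Hw : wt S (x, Imp A B) < wt S (x, A)) by (apply wt_lt; [simpl; lia| apply MM_le; auto]).
    assert (Hw2 : wt S (x, Imp A B) < wt S (x, B)) by (apply wt_lt; [simpl; lia| apply MM_le; auto]).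
    rewrite (Phi_equiv S _ _ E). split.
    + apply (Inv_equiv S _ _ E). split; [exact I1|].
      simpl; intros x' A' [[H|H]|[H|H]].
      * injection H as <- <-; auto.
      * apply I2; left; auto.
      * injection H as <- <-; auto.
      * apply I2; right; auto.
    + unfold Phi; cbn [rels ante succ].
      destruct (classic (In (x, A) (ante s))) as [HA'|HA'].
      * assert (HB' : ~ In (x, B) (succ s)) by tauto.
        assert (Hne : (x, B) <> (x, Imp A B)).
        { intro e; injection e as e. assert (fsize B = fsize (Imp A B)) by congruence. simpl in *; lia. }
        assert (G1 := acG1 lf_dec (wt S) (UF S) (ante s) ((x, A) :: ante s) (fun t _ H => in_cons _ _ _ H)).
        assert (G4 := acG4 lf_dec (wt S) (UF S) (succ s) ((x, B) :: O) (x, Imp A B) (x, B) NDU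
                  Hrem Hne (inUF S x B Hx HB) HB' (in_eq _ _)).
        lia.
      * assert (G2 := acG2 lf_dec (wt S) (UF S) (ante s) ((x, A) :: ante s) (x, A)
                  (fun t _ H => in_cons _ _ _ H) (inUF S x A Hx HA) HA' (in_eq _ _)).
        assert (G3 := acG3 lf_dec (wt S) (UF S) (succ s) ((x, B) :: O) (x, Imp A B) NDU Hrem).
        lia.
  - destruct Hp as [<-|[]].
    destruct (I2 x (Box A) (or_introl Hb)) as [Hx HI].
    destruct (I1 _ _ _ Hr) as [_ Hy].
    assert (HA : In A (FS S)) by (eapply FS_sub; [exact HI| simpl; right; apply subs_self]).
    rewrite (Phi_equiv S _ _ E). split.
    + apply (Inv_equiv S _ _ E). split; [exact I1|].
      simpl; intros x' A' [[H|H]|H].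
      * injection H as <- <-; auto.
      * apply I2; left; auto.
      * apply I2; right; auto.
    + unfold Phi; cbn [rels ante succ].
      assert (G2 := acG2 lf_dec (wt S) (UF S) (ante s) ((y, A) :: ante s) (y, A)
                (fun t _ H => in_cons _ _ _ H) (inUF S y A Hy HA) Hn (in_eq _ _)).
      assert (P := wt_pos S (y, A)). lia.
  - destruct Hp as [<-|[]].
    destruct (I2 x (Tri A) (or_introl Hb)) as [Hx HI].
    destruct (I1 _ _ _ Hr) as [_ Hy].
    assert (HA : In A (FS S)) by (eapply FS_sub; [exact HI| simpl; right; apply subs_self]).
    rewrite (Phi_equiv S _ _ E). split.
    + apply (Inv_equiv S _ _ E). split; [exact I1|].
      simpl; intros x' A' [[H|H]|H].
      * injection H as <- <-; auto.
      * apply I2; left; auto.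
      * apply I2; right; auto.
    + unfold Phi; cbn [rels ante succ].
      assert (G2 := acG2 lf_dec (wt S) (UF S) (ante s) ((y, A) :: ante s) (y, A)
                (fun t _ H => in_cons _ _ _ H) (inUF S y A Hy HA) Hn (in_eq _ _)).
      assert (P := wt_pos S (y, A)). lia.
  - destruct Hp as [<-|[]].
    destruct (I1 _ _ _ Hr1) as [Hx _].
    destruct (I1 _ _ _ Hr2) as [_ Hz].
    rewrite (Phi_equiv S _ _ E). split.
    + apply (Inv_equiv S _ _ E). split; [|exact I2].
      simpl; intros k x' z' [H|H].
      * injection H as <- <- <-; auto.
      * exact (I1 _ _ _ H).
    + unfold Phi; cbn [rels ante succ].
      assert (G2 := acG2 ratom_dec (fun _ => 1) (UR S) (rels s) (Rel k2 x z :: rels s) (Rel k2 x z)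
                (fun t _ H => in_cons _ _ _ H) (inUR S k2 x z Hx Hz) Hn (in_eq _ _)).
      cbv beta in G2; lia.
Qed.

Definition Rd := fun t' t => expand t t'.

Definition LR (l' l : list deriv) : Prop :=
  exists l1 d d' l2, l = l1 ++ d :: l2 /\ l' = l1 ++ d' :: l2 /\ expand d d'.

Lemma listacc : forall l, Forall (Acc Rd) l -> Acc LR l.
Proof.
  induction l as [|d l IH]; intros HF.
  - constructor; intros y [l1 [d [d' [l2 [E _]]]]]. destruct l1; discriminate.
  - inversion HF as [|? ? Hd Hl]; subst. specialize (IH Hl).
    clear HF Hl. revert l IH.
    induction Hd as [d Hd IHd]; intros l Hl.
    induction Hl as [l Hl IHl].
    constructor; intros y [l1 [e [e' [l2 [E1 [E2 Hex]]]]]]; subst y.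
    destruct l1 as [|x l1]; simpl in E1 |- *; injection E1 as E1 E3; subst.
    + apply IHd; [exact Hex| constructor; exact Hl].
    + apply IHl. exists l1, e, e', l2; auto.
Qed.

Lemma acc_node : forall ch, Acc LR ch -> forall s, Acc Rd (Node s ch).
Proof.
  intros ch H; induction H as [ch _ IH]; intros s.
  constructor; intros t' Hex; unfold Rd in Hex.
  inversion Hex; subst. apply IH. exists l1, d, d', l2; auto.
Qed.

Lemma acc_leaf S : forall n s, Inv S s -> Phi S s < n -> Acc Rd (Leaf s).
Proof.
  induction n as [|n IH]; intros s HI Hlt; [lia|].
  constructor; intros t' Hex; unfold Rd in Hex.
  inversion Hex as [s0 ps Hsa|]; subst.
  apply acc_node, listacc. apply Forall_forall; intros d Hd.
  apply in_map_iff in Hd; destruct Hd as [p [<- Hp]].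
  destruct (step_dec S s ps p HI Hsa Hp) as [HIp Hlp].
  apply IH; auto; lia.
Qed.

Fixpoint allD (l : list deriv) : Prop :=
  match l with [] => True | d :: l' => is_deriv d /\ allD l' end.

Lemma is_deriv_Node s ch : is_deriv (Node s ch) = (rule_inst s (map root ch) /\ allD ch).
Proof. reflexivity. Qed.

Fixpoint leavesL (l : list deriv) : list sequent :=
  match l with [] => [] | d :: l' => open_leaves d ++ leavesL l' end.

Lemma open_leaves_Node s ch : open_leaves (Node s ch) = leavesL ch.
Proof. reflexivity. Qed.

Lemma allD_app : forall l1 l2, allD (l1 ++ l2) <-> allD l1 /\ allD l2.
Proof. induction l1; simpl; intros; [tauto|]. rewrite IHl1; tauto. Qed.

Lemma sat_rule s ps : sat_app s ps -> rule_inst s ps.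
Proof.
  intros H; destruct H as [x A B G p1 p2 H1 _ _ H4 H5|x A B O p H1 _ H3|x y A p H1 H2 _ H4|x y A p H1 H2 _ H4|k1 k2 x y z p H1 H2 _ H4].
  - exact (ri_impL s x A B G p1 p2 H1 H4 H5).
  - exact (ri_impR s x A B O p H1 H3).
  - exact (ri_boxL s x y A p H1 H2 H4).
  - exact (ri_triL s x y A p H1 H2 H4).
  - exact (ri_trans s k1 k2 x y z p H1 H2 H4).
Qed.

Lemma expand_pres : forall d d', expand d d' -> root d' = root d /\ (is_deriv d -> is_deriv d').
Proof.
  intros d d' H; induction H as [s ps Hsa| s l1 d d' l2 Hex [IHr IHd]]; split; auto.
  - intros _. rewrite is_deriv_Node. split.
    + rewrite map_map; simpl; rewrite map_id; apply sat_rule; auto.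
    + clear Hsa; induction ps; simpl; auto.
  - rewrite !is_deriv_Node, !allD_app, !map_app; simpl. rewrite IHr.
    intros [Hr [Ha [Hb Hc]]]; auto.
Qed.

Fixpoint deriv_ind' (P : deriv -> Prop) (HL : forall s, P (Leaf s))
  (HN : forall s ch, Forall P ch -> P (Node s ch)) (t : deriv) : P t :=
  match t with
  | Leaf s => HL s
  | Node s ch => HN s ch ((fix go (l : list deriv) : Forall P l :=
        match l with
        | [] => Forall_nil _
        | d :: l' => Forall_cons _ (deriv_ind' P HL HN d) (go l')
        end) ch)
  end.

Lemma leaf_expand : forall t s ps, In s (open_leaves t) -> sat_app s ps -> exists t', expand t t'.
Proof.
  intro t; induction t as [s0|s0 ch HF] using deriv_ind'; intros s ps Hin Hsa.
  - simpl in Hin; destruct Hin as [<-|[]]. eexists; constructor; eauto.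
  - rewrite open_leaves_Node in Hin.
    induction ch as [|d ch IHch]; simpl in Hin; [contradiction|].
    inversion HF as [|? ? Hd Hch]; subst.
    apply in_app_or in Hin; destruct Hin as [Hin|Hin].
    + destruct (Hd s ps Hin Hsa) as [d' Hd'].
      exists (Node s0 ([] ++ d' :: ch)). apply (ex_node s0 [] d d' ch Hd').
    + destruct (IHch Hch Hin) as [t' Ht'].
      inversion Ht'; subst.
      exists (Node s0 ((d :: l1) ++ d' :: l2)).
      apply (ex_node s0 (d :: l1) d0 d' l2); auto.
Qed.

Lemma seq_equiv_refl s : seq_equiv s s.
Proof. split; [|split]; apply Permutation_refl. Qed.

Lemma no_app_sat s : (forall ps, ~ sat_app s ps) -> saturated s.
Proof.
  intros H; split.
  - intros [x A] _; destruct A as [| |A1 A2|A1|A1]; simpl; auto.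
    + split.
      * intro Hg.
        destruct (classic (In (x, A1) (succ s))) as [|n1]; [left; auto|].
        destruct (classic (In (x, A2) (ante s))) as [|n2]; [right; auto|].
        exfalso. apply in_split in Hg; destruct Hg as [l1 [l2 E]].
        assert (P : Permutation (ante s) ((x, Imp A1 A2) :: l1 ++ l2)) by
          (rewrite E; apply Permutation_sym, Permutation_middle).
        eapply H, (sa_impL s x A1 A2 (l1 ++ l2) _ _ P n1 n2); apply seq_equiv_refl.
      * intro Hd.
        destruct (classic (In (x, A1) (ante s) /\ In (x, A2) (succ s))) as [|n]; auto.
        exfalso. apply in_split in Hd; destruct Hd as [l1 [l2 E]].
        assert (P : Permutation (succ s) ((x, Imp A1 A2) :: l1 ++ l2)) by
          (rewrite E; apply Permutation_sym, Permutation_middle).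
        eapply H, (sa_impR s x A1 A2 (l1 ++ l2) _ P n); apply seq_equiv_refl.
    + intros Hb y Hr. apply NNPP; intro n.
      eapply H, (sa_boxL s x y A1 _ Hr Hb n); apply seq_equiv_refl.
    + intros Hb y Hr. apply NNPP; intro n.
      eapply H, (sa_triL s x y A1 _ Hr Hb n); apply seq_equiv_refl.
  - intros k1 k2 x y z H1 H2. apply NNPP; intro n.
    eapply H, (sa_trans s k1 k2 x y z _ H1 H2 n); apply seq_equiv_refl.
Qed.

Theorem lemma2 (S : sequent) :
  Acc (fun t' t => expand t t') (Leaf S) /\
  (forall t, clos_refl_trans deriv expand (Leaf S) t ->
     (forall t', ~ expand t t') ->
     root t = S /\ is_deriv t /\
     (forall s, In s (open_leaves t) -> saturated s)).
Proof.
  split.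
  - apply (acc_leaf S (Nat.succ (Phi S S)) S (Inv_init S)); apply Nat.lt_succ_diag_r.
  - intros t Hrt Hfin.
    assert (HP : root t = S /\ is_deriv t).
    { clear Hfin. apply clos_rt_rtn1 in Hrt. induction Hrt as [|y z Hyz Hrt IH].
      - simpl; split; [reflexivity| exact I].
      - destruct (expand_pres _ _ Hyz) as [Hr Hd]. destruct IH as [IH1 IH2].
        split; [congruence| auto]. }
    destruct HP as [HP1 HP2]. split; [exact HP1|]. split; [exact HP2|].
    intros s Hs. apply no_app_sat. intros ps Hsa.
    destruct (leaf_expand t s ps Hs Hsa) as [t' Ht']. exact (Hfin t' Ht').
Qed.
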